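(* For $a\in\mathfrak z$ and $w\in\mathfrak{H}^1$: (i) $S_\hbar^t(a\circ_+w)=a\circ_+S_\hbar^t(w)$; (ii) $S_\hbar^t(wy)=\gamma_\hbar^t(w)\,y$, where $\gamma_\hbar^t$ is the algebra automorphism of $\mathfrak{H}$ with $\gamma_\hbar^t(x)=x$ and $\gamma_\hbar^t(y)=tx+y+\hbar t$.
   Context: Let $\hbar,t$ be formal variables and $\mathfrak{H}=\mathbb{Q}[\hbar,t]\langle x,y\rangle$ the noncommutative polynomial algebra over $\mathbb{Q}[\hbar,t]$; put $\mathfrak{H}^1=\mathbb{Q}[\hbar,t]+\mathfrak{H}y$ and $z_j=x^{j-1}y$ ($j\ge1$). Let $\mathfrak z$ be the $\mathbb{Q}[\hbar,t]$-submodule spanned by $\{z_j\}_{j\ge1}$, with the $\mathbb{Q}[\hbar,t]$-bilinear product $z_i\circ_+ z_j=z_{i+j}+\hbar z_{i+j-1}$, extended to an action of $\mathfrak z$ on $\mathfrak{H}^1$ by $z_i\circ_+1=0$, $z_i\circ_+(z_jw)=(z_i\circ_+z_j)w$ ($w\in\mathfrak{H}^1$). Let $S_\hbar^t:\mathfrak{H}^1\to\mathfrak{H}^1$ be the $\mathbb{Q}[\hbar,t]$-linear map with $S_\hbar^t(1)=1$ and $S_\hbar^t(z_kw)=z_kS_\hbar^t(w)+t\,z_k\circ_+S_\hbar^t(w)$ for $k\ge1$ and words $w\in\mathfrak{H}^1$. *)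

(* Defs.v *)
From mathcomp Require Import all_boot all_algebra.
Set Implicit Arguments. Unset Strict Implicit. Unset Printing Implicit Defensive.
Import GRing.Theory.
Local Open Scope ring_scope.

(** Coefficient ring Q[hbar, t] := (Q[hbar])[t]. *)
Definition R : comNzRingType := {poly {poly rat}}.
Definition tt_ : R := 'X.
Definition hbar : R := ('X)%:P.

Definition x : bool := false.
Definition y : bool := true.
Definition word := seq bool.

(** An element of H = Q[hbar,t]<x,y> is represented as a formal linear
    combination (finite list of (coefficient, word)); two representations
    denote the same element iff they have the same coefficient function. *)
Definition H := seq (R * word).
Definition hcoef (p : H) (u : word) : R := \sum_(m <- p | m.2 == u) m.1.
Definition heq (p q : H) : Prop := forall u, hcoef p u = hcoef q u.

Definition hone : H := [:: (1, [::])].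
Definition hword (u : word) : H := [:: (1, u)].
Definition hscale (c : R) (p : H) : H := [seq (c * m.1, m.2) | m <- p].
Definition hadd (p q : H) : H := p ++ q.
Definition hmul (p q : H) : H := [seq (a.1 * b.1, a.2 ++ b.2) | a <- p, b <- q].
Definition hlin (f : word -> H) (p : H) : H := flatten [seq hscale m.1 (f m.2) | m <- p].

Definition z (j : nat) : word := rcons (nseq j.-1 x) y.

Definition inH1 (p : H) : Prop :=
  forall u, hcoef p u != 0 -> u = [::] \/ last x u = y.
Definition inZ (a : H) : Prop :=
  forall u, hcoef a u != 0 -> exists2 j, (0 < j)%N & u = z j.

(** split a word v = z_j w' (first block); None if v contains no y *)
Definition split_z (v : word) : option (nat * word) :=
  let i := index y v in
  if (i < size v)%N then Some (i.+1, drop i.+1 v) else None.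

(** z_k o+ v for a word v of H^1:
    z_k o+ 1 = 0,  z_k o+ (z_j w') = (z_(k+j) + hbar z_(k+j-1)) w' *)
Definition zcirc (k : nat) (v : word) : H :=
  match split_z v with
  | Some (j, w') => [:: (1, z (k + j) ++ w'); (hbar, z (k + j).-1 ++ w')]
  | None => [::]
  end.

Definition circ_word (u v : word) : H :=
  match split_z u with Some (i, _) => zcirc i v | None => [::] end.
Definition circ (a w : H) : H := hlin (fun u => hlin (circ_word u) w) a.

(** decomposition of a word into blocks z_(k_1) ... z_(k_n)
    (trailing x's, which never occur in H^1, are dropped) *)
Fixpoint zdec (n : nat) (v : word) : seq nat :=
  match v with
  | [::] => [::]
  | b :: v' => if b then n.+1 :: zdec 0 v' else zdec n.+1 v'
  end.

Fixpoint Sz (ks : seq nat) : H :=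
  match ks with
  | [::] => hone
  | k :: ks' => hadd (hmul (hword (z k)) (Sz ks'))
                     (hscale tt_ (hlin (zcirc k) (Sz ks')))
  end.
Definition S (p : H) : H := hlin (fun u => Sz (zdec 0 u)) p.

Definition gamma_letter (b : bool) : H :=
  if b then [:: (tt_, [:: x]); (1, [:: y]); (hbar * tt_, [::])]
  else [:: (1, [:: x])].
Fixpoint gamma_word (u : word) : H :=
  match u with
  | [::] => hone
  | b :: u' => hmul (gamma_letter b) (gamma_word u')
  end.
Definition gamma (p : H) : H := hlin gamma_word p.

(* Main.v *)
Require Import Defs.
From mathcomp Require Import all_boot all_algebra.
From mathcomp Require Import ring zify.
Set Implicit Arguments. Unset Strict Implicit. Unset Printing Implicit Defensive.
Import GRing.Theory.
Local Open Scope ring_scope.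

Definition ev (p : H) (F : word -> R) : R := \sum_(m <- p) m.1 * F m.2.

Lemma ev_nil F : ev [::] F = 0.
Proof. by rewrite /ev big_nil. Qed.
Lemma ev_cons m p F : ev (m :: p) F = m.1 * F m.2 + ev p F.
Proof. by rewrite /ev big_cons. Qed.
Lemma ev_cat p q F : ev (p ++ q) F = ev p F + ev q F.
Proof. by rewrite /ev big_cat. Qed.
Lemma ev_scale c p F : ev (hscale c p) F = c * ev p F.
Proof. by rewrite /ev big_map mulr_sumr; apply: eq_bigr => m _; rewrite mulrA. Qed.
Lemma ev_lin g p F : ev (hlin g p) F = ev p (fun v => ev (g v) F).
Proof.
elim: p => [|m p IH]; first by rewrite /hlin /= !ev_nil.
by rewrite /hlin /= ev_cat ev_scale -/(hlin g p) IH ev_cons.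
Qed.
Lemma ev_hmul p q F : ev (hmul p q) F = ev p (fun v => ev q (fun v' => F (v ++ v'))).
Proof.
elim: p => [|a p IH]; first by rewrite /hmul /= !ev_nil.
rewrite /hmul allpairs_cons ev_cat -/(hmul p q) IH ev_cons; congr (_ + _).
rewrite /ev big_map mulr_sumr; apply: eq_bigr => m _ /=; by rewrite mulrA.
Qed.
Lemma ev_word v F : ev (hword v) F = F v.
Proof. by rewrite /hword ev_cons ev_nil mul1r addr0. Qed.
Lemma ev_hone F : ev hone F = F [::].
Proof. exact: ev_word. Qed.
Lemma ev_add p F G : ev p (fun v => F v + G v) = ev p F + ev p G.
Proof. by rewrite /ev -big_split; apply: eq_bigr => m _; rewrite mulrDr. Qed.
Lemma ev_scalF p c F : ev p (fun v => c * F v) = c * ev p F.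
Proof. by rewrite /ev mulr_sumr; apply: eq_bigr => m _; rewrite mulrCA. Qed.
Lemma ev_ext p F G : (forall v, F v = G v) -> ev p F = ev p G.
Proof. by move=> e; apply: eq_bigr => m _; rewrite e. Qed.
Lemma ev_0 p : ev p (fun _ => 0) = 0.
Proof. by rewrite /ev big1 // => m _; rewrite mulr0. Qed.

Lemma hcoef_ev p u : hcoef p u = ev p (fun v => if v == u then 1 else 0).
Proof.
rewrite /hcoef /ev big_mkcond; apply: eq_bigr => m _.
by case: ifP; rewrite ?mulr1 ?mulr0.
Qed.

Lemma heq_ev p q : (forall F, ev p F = ev q F) -> heq p q.
Proof. by move=> e u; rewrite !hcoef_ev e. Qed.

Lemma ev_sum p G s : uniq s -> {subset map snd p <= s} ->
  ev p G = \sum_(v <- s) hcoef p v * G v.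
Proof.
elim: p => [|m p IH] us sub.
  by rewrite ev_nil big1 // => v _; rewrite /hcoef big_nil mul0r.
have ms : m.2 \in s by apply: sub; rewrite inE eqxx.
rewrite ev_cons IH //; last by move=> v vin; apply: sub; rewrite inE vin orbT.
rewrite [in RHS](eq_bigr (fun v => (if m.2 == v then m.1 else 0) * G v + hcoef p v * G v)); last first.
  by move=> v _; rewrite /hcoef big_cons; case: ifP => _ /=; rewrite ?mulrDl ?mul0r ?add0r.
have -> : forall (A B : word -> R), \sum_(v <- s) (A v + B v) = \sum_(v <- s) A v + \sum_(v <- s) B v.
  by move=> A B; rewrite big_split.
congr (_ + _).
rewrite (bigD1_seq m.2) //= eqxx big1 ?addr0 // => v; rewrite eq_sym => /negbTE ->.
by rewrite mul0r.
Qed.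

Lemma ev_supp p G1 G2 : (forall v, hcoef p v != 0 -> G1 v = G2 v) -> ev p G1 = ev p G2.
Proof.
move=> e; rewrite !(@ev_sum p _ (undup (map snd p))) ?undup_uniq //; last first.
  by move=> v; rewrite mem_undup. by move=> v; rewrite mem_undup.
apply: eq_bigr => v _; have [->|/e ->] := eqVneq (hcoef p v) 0; by rewrite ?mul0r.
Qed.

Lemma ev_S p F : ev (S p) F = ev p (fun u => ev (Sz (zdec 0 u)) F).
Proof. exact: ev_lin. Qed.

Lemma ev_Sz_cons k ks F : ev (Sz (k :: ks)) F =
  ev (Sz ks) (fun u => F (z k ++ u)) + tt_ * ev (Sz ks) (fun u => ev (zcirc k u) F).
Proof. by rewrite /= /hadd ev_cat ev_hmul ev_word ev_scale ev_lin. Qed.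

Lemma zdec_nseq m n w : zdec n (nseq m x ++ w) = zdec (n + m) w.
Proof. by elim: m n => [|m IH] n; rewrite ?addn0 //= IH addnS. Qed.

Lemma zdec_y n w : zdec n (y :: w) = n.+1 :: zdec 0 w.
Proof. by []. Qed.

Lemma notin_y v : y \notin v -> exists n, v = nseq n x.
Proof.
elim: v => [|b v IH]; first by exists 0%N.
rewrite inE negb_or => /andP[hb /IH [n ->]]; exists n.+1.
by case: b hb.
Qed.

Lemma wdec v : y \in v -> exists a u, v = nseq a x ++ y :: u.
Proof.
elim: v => [|b v IH] //; case: b => [_|]; first by exists 0%N, v.
rewrite inE /= => /IH [a [u ->]]; by exists a.+1, u.
Qed.

Lemma y_nseq a : (y \in nseq a x) = false.
Proof. by rewrite mem_nseq andbF. Qed.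

Lemma split_z_y a u : split_z (nseq a x ++ y :: u) = Some (a.+1, u).
Proof.
rewrite /split_z index_cat y_nseq size_nseq /= ?eqxx addn0 size_cat size_nseq /=.
rewrite addnS ltnS leq_addr; congr Some; congr pair.
by elim: a => [|a IH] /=; rewrite ?drop0.
Qed.

Lemma split_z_none v : y \notin v -> split_z v = None.
Proof. by move=> h; rewrite /split_z memNindex // ltnn. Qed.

Lemma z_nseq k : z k.+1 = nseq k x ++ [:: y].
Proof. by rewrite /z -cats1. Qed.

Lemma ev_zcirc k u F : y \in u ->
  ev (zcirc k.+1 u) F = F (nseq k.+1 x ++ u) + hbar * F (nseq k x ++ u).
Proof.
move=> /wdec [a [u' ->]]; rewrite /zcirc split_z_y !ev_cons ev_nil /= mul1r addr0.
by rewrite !addnS !z_nseq !nseqD -!catA.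
Qed.

Lemma ev_zcirc0 k u F : y \notin u -> ev (zcirc k u) F = 0.
Proof. by move=> h; rewrite /zcirc split_z_none // ev_nil. Qed.

Lemma zdec_nox n : zdec 0 (nseq n x) = [::].
Proof. by rewrite -[nseq n x]cats0 zdec_nseq. Qed.

Lemma ynil : y \notin ([::] : word).
Proof. by []. Qed.

Lemma word_i j v F :
  ev (zcirc j.+1 v) (fun u => ev (Sz (zdec 0 u)) F) =
  ev (Sz (zdec 0 v)) (fun u => ev (zcirc j.+1 u) F).
Proof.
have [yv|nyv] := boolP (y \in v); last first.
  rewrite ev_zcirc0 //; have [n ->] := notin_y nyv.
  by rewrite zdec_nox /= ev_hone ev_zcirc0.
rewrite ev_zcirc //; have [a [w ev]] := wdec yv; subst v.
rewrite !catA -!nseqD !zdec_nseq !zdec_y !add0n !ev_Sz_cons.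
set T := Sz (zdec 0 w).
rewrite (@ev_ext T (fun u => ev (zcirc j.+1 (z a.+1 ++ u)) F)
   (fun u => F (z (j.+1 + a).+1 ++ u) + hbar * F (z (j + a).+1 ++ u))); last first.
  move=> u; rewrite ev_zcirc; last by rewrite z_nseq mem_cat mem_cat inE eqxx orbT.
  by rewrite !z_nseq !catA -!nseqD.
rewrite (@ev_ext T (fun u => ev (zcirc a.+1 u) (fun u' => ev (zcirc j.+1 u') F))
   (fun u => ev (zcirc (j.+1 + a).+1 u) F + hbar * ev (zcirc (j + a).+1 u) F)); last first.
  move=> u; have [yu|nyu] := boolP (y \in u); last by rewrite !ev_zcirc0 // mulr0 addr0.
  rewrite !ev_zcirc // ?mem_cat ?yu ?orbT //.
  rewrite !catA -!nseqD !addSn !addnS -!addnS.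
  have -> : (j + a.+1 = (j + a).+1)%N by rewrite addnS.
  ring.
rewrite !ev_add !ev_scalF; ring.
Qed.

Lemma ev_gamma_x u G : ev (gamma_word (x :: u)) G = ev (gamma_word u) (fun w => G (x :: w)).
Proof. by rewrite /= ev_hmul /gamma_letter /x ev_cons ev_nil mul1r addr0. Qed.

Lemma ev_gamma_nseq n u G :
  ev (gamma_word (nseq n x ++ u)) G = ev (gamma_word u) (fun w => G (nseq n x ++ w)).
Proof.
elim: n G => [|n IH] G //=.
rewrite -/(gamma_word (x :: (nseq n x ++ u))) ev_gamma_x IH //.
Qed.

Lemma ev_gamma_y u G : ev (gamma_word (y :: u)) G =
  tt_ * ev (gamma_word u) (fun w => G (x :: w)) + ev (gamma_word u) (fun w => G (y :: w))
  + hbar * tt_ * ev (gamma_word u) G.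
Proof.
rewrite /= ev_hmul /gamma_letter /y !ev_cons ev_nil /= mul1r addr0 addrA.
by [].
Qed.

Lemma word_ii v F :
  ev (Sz (zdec 0 (v ++ [:: y]))) F = ev (gamma_word v) (fun w => F (w ++ [:: y])).
Proof.
have [n] := ubnP (size v); elim: n v F => // n IH v F.
have [yv|nyv] := boolP (y \in v); last first.
  move=> _; have [m ->] := notin_y nyv.
  rewrite zdec_nseq zdec_y add0n ev_Sz_cons /= !ev_hone ev_zcirc0 // mulr0 addr0.
  have := ev_gamma_nseq m [::] (fun w => F (w ++ [:: y])); rewrite cats0 => ->.
  by rewrite /= ev_hone !cats0 z_nseq.
have [a [u ->]] := wdec yv; rewrite size_cat /= => hs.
have hu : (size u < n)%N by move: hs; rewrite size_nseq; lia.
rewrite -catA cat_cons zdec_nseq zdec_y add0n ev_Sz_cons !IH //.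
rewrite ev_gamma_nseq ev_gamma_y.
rewrite (@ev_ext _ (fun w => ev (zcirc a.+1 (w ++ [:: y])) F)
   (fun w => F ((nseq a x ++ x :: w) ++ [:: y]) + hbar * F ((nseq a x ++ w) ++ [:: y]))); last first.
  move=> w; rewrite ev_zcirc; last by rewrite mem_cat inE eqxx orbT.
  by rewrite -!catA -addn1 nseqD -!catA.
rewrite (@ev_ext _ (fun w => F (z a.+1 ++ w ++ [:: y]))
   (fun w => F ((nseq a x ++ y :: w) ++ [:: y]))); last first.
  by move=> w; rewrite z_nseq -!catA.
rewrite !ev_add !ev_scalF; ring.
Qed.

Theorem lemma2p1 :
  (forall a w : H, inZ a -> inH1 w -> heq (S (circ a w)) (circ a (S w))) /\
  (forall w : H, inH1 w -> heq (S (hmul w (hword [:: y]))) (hmul (gamma w) (hword [:: y]))).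
Proof.
split.
  move=> a w Ha _; apply: heq_ev => F.
  rewrite ev_S /circ !ev_lin; apply: ev_supp => u /Ha [j j0 ->].
  case: j j0 => // j _.
  have -> : circ_word (z j.+1) = zcirc j.+1.
    by rewrite /circ_word z_nseq split_z_y.
  rewrite !ev_lin; apply: ev_ext => v; exact: word_i.
move=> w _; apply: heq_ev => F.
rewrite ev_S !ev_hmul /gamma ev_lin; apply: ev_ext => v.
rewrite ev_word word_ii; apply: ev_ext => u; by rewrite ev_word.
Qed.
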